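(* Let $p\ge1$ and let $G_1,G_2$ be finite discrete probability measures on $\mathbb{R}^d\times S_d^{++}(\mathbb{R})$. Suppose that for every $(\mu_0,\Sigma_0)\in\mathbb{R}^d\times S_d^{++}(\mathbb{R})$, $$\int d((\mu_1,\Sigma_1),(\mu_0,\Sigma_0))^p\,dG_1(\mu_1,\Sigma_1)<\infty\quad\text{and}\quad\int d((\mu_0,\Sigma_0),(\mu_2,\Sigma_2))^p\,dG_2(\mu_2,\Sigma_2)<\infty,$$ where $d((\mu_1,\Sigma_1),(\mu_2,\Sigma_2))=\sqrt{\|\mu_1-\mu_2\|_2^2+0.25\,\log(\lambda_{\max}(\Sigma_1,\Sigma_2))^2}$ and $\lambda_{\max}(\Sigma_1,\Sigma_2)$ is the largest eigenvalue $\lambda$ of the generalized eigenvalue problem $\Sigma_1u=\lambda\Sigma_2u$. Then $\text{SMix-}W_p^p(G_1,G_2)<\infty$.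
   Context: $S_d^{++}(\mathbb{R})$ is the set of $d\times d$ real symmetric positive definite matrices. Let $\mathbb{S}=\{w\in\mathbb{R}^2:\|w\|_2=1\}$ and $\mathbb{S}^{d-1}=\{v\in\mathbb{R}^d:\|v\|_2=1\}$, with $\mathcal{U}(\cdot)$ the uniform distribution. For $v\in\mathbb{S}^{d-1}$ and $w=(w_1,w_2)\in\mathbb{S}$ set $P_{v,w}(\mu,\Sigma)=w_1\langle v,\mu\rangle+w_2\log\big(\sqrt{v^\top\Sigma v}\big)$. For finite discrete probability measures $G_1,G_2$ on $\mathbb{R}^d\times S_d^{++}(\mathbb{R})$ the sliced mixture Wasserstein distance is $$\text{SMix-}W_p^p(G_1,G_2)=\mathbb{E}_{(w,v)\sim\mathcal{U}(\mathbb{S})\otimes\mathcal{U}(\mathbb{S}^{d-1})}\big[W_p^p(P_{v,w}\sharp G_1,P_{v,w}\sharp G_2)\big],$$ where $\sharp$ denotes push-forward and $W_p^p(\alpha,\beta)=\inf_{\pi\in\Pi(\alpha,\beta)}\int|x-y|^p\,d\pi(x,y)$ is the $p$-th power of the Wasserstein-$p$ distance between probability measures on $\mathbb{R}$. *)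

(* Defs.v *)
From HB Require Import structures.
From mathcomp Require Import all_boot all_order all_algebra.
From mathcomp Require Import all_classical all_reals all_analysis.
Set Implicit Arguments. Unset Strict Implicit. Unset Printing Implicit Defensive.
Import Order.TTheory GRing.Theory Num.Theory.
Import numFieldNormedType.Exports.
Local Open Scope classical_set_scope.
Local Open Scope ring_scope.

Section Defs.
Variable R : realType.

Definition l2norm (k : nat) (v : 'cV[R]_k) : R :=
  Num.sqrt (\sum_(i < k) v i 0 ^+ 2).

Definition dotv (k : nat) (u v : 'cV[R]_k) : R := \sum_(i < k) u i 0 * v i 0.

Definition qform (k : nat) (S : 'M[R]_k) (v : 'cV[R]_k) : R := (v^T *m S *m v) 0 0.

Definition spd (k : nat) (S : 'M[R]_k) : Prop :=
  S^T = S /\ forall u : 'cV[R]_k, u != 0 -> 0 < qform S u.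

Definition gen_eigvals (k : nat) (S1 S2 : 'M[R]_k) : set R :=
  [set l | exists u : 'cV[R]_k, u != 0 /\ S1 *m u = l *: (S2 *m u)].
Definition lambda_max (k : nat) (S1 S2 : 'M[R]_k) : R := sup (gen_eigvals S1 S2).

Definition gdist (k : nat) (m1 : 'cV[R]_k) (S1 : 'M[R]_k)
  (m2 : 'cV[R]_k) (S2 : 'M[R]_k) : R :=
  Num.sqrt (l2norm (m1 - m2) ^+ 2 + (1/4) * (ln (lambda_max S1 S2)) ^+ 2).

(* A finite discrete measure  sum_i wt i * delta_(mu i, Sig i)  on R^d x S_d^{++}. *)
Record fdmeas (k : nat) := FDMeas {
  natoms : nat;
  wt : 'I_natoms -> R;
  atom_mu : 'I_natoms -> 'cV[R]_k;
  atom_Sig : 'I_natoms -> 'M[R]_k }.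
Arguments wt {k} f _.
Arguments atom_mu {k} f _.
Arguments atom_Sig {k} f _.

Definition is_fdprob (k : nat) (G : fdmeas k) : Prop :=
  (forall i, 0 <= wt G i) /\ (\sum_i wt G i = 1) /\ (forall i, spd (atom_Sig G i)).

Definition fd_integral (k : nat) (G : fdmeas k)
  (f : 'cV[R]_k -> 'M[R]_k -> R) : \bar R :=
  (\sum_i (wt G i)%:E * (f (atom_mu G i) (atom_Sig G i))%:E)%E.

Definition Pvw (k : nat) (v : 'cV[R]_k) (w : 'cV[R]_2)
  (m : 'cV[R]_k) (S : 'M[R]_k) : R :=
  w 0 0 * dotv v m + w 1 0 * ln (Num.sqrt (qform S v)).

Definition pushfd (k : nat) (f : 'cV[R]_k -> 'M[R]_k -> R) (G : fdmeas k)
  : set R -> \bar R :=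
  fun A => (\sum_i (wt G i * \1_A (f (atom_mu G i) (atom_Sig G i)))%:E)%E.

Definition couplings (alpha beta : set R -> \bar R) : set (probability (R * R)%type R) :=
  [set pi | forall A : set R, measurable A ->
      pi (A `*` setT) = alpha A /\ pi (setT `*` A) = beta A].

Definition Wpp (p : R) (alpha beta : set R -> \bar R) : \bar R :=
  ereal_inf [set (\int[pi]_(z in setT) ((`|z.1 - z.2|) `^ p)%:E)%E
            | pi in couplings alpha beta].

Fixpoint iter_int (k : nat) (f : (nat -> R) -> \bar R) : \bar R :=
  match k with
  | 0 => f (fun _ => 0)
  | k'.+1 => (\int[lebesgue_measure]_(t in [set: R])
                iter_int k' (fun x => f (fun j => if j == k' then t else x j)))%E
  end.

Definition vec_of (k : nat) (x : nat -> R) : 'cV[R]_k := \col_(i < k) x i.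

(* Expectation of g over v ~ U(S^{k-1}), via the normalized cone measure:
   E[g(v)] = (1/|B_k|) int_{0 < |x| <= 1} g(x/|x|) dx. *)
Definition E_sphere (k : nat) (g : 'cV[R]_k -> \bar R) : \bar R :=
  (iter_int k (fun x => let y := vec_of k x in
      if ((0 < l2norm y) && (l2norm y <= 1))%R then g ((l2norm y)^-1 *: y)%R else 0%E)
   * ((fine (iter_int k (fun x => if (l2norm (vec_of k x) <= 1)%R then 1%E else 0%E)))^-1)%:E)%E.

(* SMix-W_p^p(G1,G2) = E_{(w,v) ~ U(S) x U(S^{d-1})}[W_p^p(P_{v,w}#G1, P_{v,w}#G2)],
   written as an iterated expectation (Tonelli). *)
Definition SMixWpp (k : nat) (p : R) (G1 G2 : fdmeas k) : \bar R :=
  E_sphere (fun w : 'cV[R]_2 => E_sphere (fun v : 'cV[R]_k =>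
     Wpp p (pushfd (Pvw v w) G1) (pushfd (Pvw v w) G2))).

End Defs.

(* Main.v *)
Require Import Defs.
From HB Require Import structures.
From mathcomp Require Import all_boot all_order all_algebra.
From mathcomp Require Import all_classical all_reals all_analysis.
From mathcomp Require Import ring lra.
From mathcomp Require Import measurable_realfun.
Import Order.TTheory GRing.Theory Num.Theory.
Local Open Scope ring_scope.
Set Implicit Arguments. Unset Strict Implicit.
Section S.
Context (R : realType).
Local Open Scope ereal_scope.
Lemma le_int_nm d (T : measurableType d) (mu : {measure set T -> \bar R}) (f g : T -> \bar R) :
  (forall x, 0 <= f x) -> (forall x, f x <= g x) ->
  \int[mu]_(x in setT) f x <= \int[mu]_(x in setT) g x.
Proof.
move=> f0 fg.
have g0 : forall x, 0 <= g x by move=> x; exact: le_trans (f0 x) (fg x).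
rewrite !ge0_integralTE//.
apply: le_ereal_sup => _ [h hf <-]; exists h => // x; exact: le_trans (hf x) (fg x).
Qed.

Lemma iter_int_ge0 k : forall (f : (nat -> R) -> \bar R), (forall x, 0 <= f x) -> 0 <= iter_int k f.
Proof.
elim: k => [|k IH] f f0 /=; first exact: f0.
apply: integral_ge0 => t _; apply: IH => x; exact: f0.
Qed.

Lemma int_box (c : R) : (0 <= c)%R ->
  \int[lebesgue_measure]_(t in [set: R]) ((if `|t| <= 1 then c else 0) )%:E = (c * 2)%:E.
Proof.
move=> c0.
have -> : (fun t : R => ((if `|t| <= 1 then c else 0))%:E) = (fun t => (c * \1_(`[(-1)%R, 1%R]%classic : set R) t)%:E).
  apply/funext => t; rewrite indicE.
  have -> : (t \in (`[(-1)%R, 1%R]%classic : set R)) = (`|t| <= 1)%R.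
    by apply/idP/idP; [move=> /set_mem /=; rewrite in_itv /= ler_norml | move=> H; apply/mem_set; rewrite /= in_itv /= -ler_norml].
  by case: (`|t| <= 1)%R; rewrite ?mulr1 ?mulr0.
have := @integralZl_indic _ _ R lebesgue_measure setT measurableT (fun _ : R => (`[(-1)%R, 1%R]%classic : set R)) c.
rewrite /= => ->; last 2 first.
- by move=> /lt_le_trans /(_ c0); rewrite ltxx.
- exact: measurable_itv.
rewrite integral_indic// setIT.
have L := @lebesgue_measure_itv R `[(-1)%R, 1%R].
rewrite /= ifT in L; last by rewrite lte_fin; lra.
rewrite [X in _ * X]L.
by rewrite -EFinD -EFinM; congr (_%:E); lra.
Qed.

Local Close Scope ereal_scope.
Lemma iter_int_cube k : forall (f : (nat -> R) -> \bar R) (C : R), 0 <= C ->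
  (forall x, (0 <= f x)%E) ->
  (forall x, (f x <= if [forall j : 'I_k, (`|x j| <= 1)%R] then C%:E else 0)%E) ->
  (iter_int k f <= (C * 2 ^+ k)%:E)%E.
Proof.
elim: k => [|k IH] f C C0 f0 fC /=.
  rewrite expr0 mulr1; apply: le_trans (fC _) _.
  by case: ifP; rewrite ?lee_fin.
apply: le_trans (@le_int_nm _ _ lebesgue_measure _ (fun t => ((if `|t| <= 1 then C else 0) * 2 ^+ k)%:E) _ _) _.
- by move=> t; apply: iter_int_ge0 => x; exact: f0.
- move=> t; apply: IH; first by case: ifP.
    by move=> x; exact: f0.
  move=> x; apply: le_trans (fC _) _.
  case: ifPn; last first.
    by move=> _; case: ifP => _ //; case: ifP.
  move=> /fintype.forallP H.
  have Ht : `|t| <= 1 by have := H ord_max; rewrite /= eqxx.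
  have -> : [forall j : 'I_k, `|x j| <= 1].
    apply/fintype.forallP => j; have := H (widen_ord (leqnSn k) j).
    by rewrite /= ifF // ltn_eqF.
  by rewrite Ht.
- have -> : (fun x => ((if `|x| <= 1 then C else 0) * 2 ^+ k)%:E) = (fun x : R => (if `|x| <= 1 then C * 2^+k else 0)%:E).
    by apply/funext => x; case: ifP; rewrite ?mul0r.
  rewrite int_box ?mulr_ge0 ?exprn_ge0 // lee_fin exprS.
  by rewrite [2 * _]mulrC mulrA.
Qed.

Lemma sq_le_sum k (y : 'cV[R]_k) i : y i 0 ^+ 2 <= \sum_j y j 0 ^+ 2.
Proof. by rewrite (bigD1 i) //= lerDl sumr_ge0 // => j _; exact: sqr_ge0. Qed.

Lemma abs_le1 (a : R) : a ^+ 2 <= 1 -> `|a| <= 1.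
Proof. by move=> h; rewrite ler_norml; apply/andP; split; nra. Qed.

Lemma dotv_unit_le1 k (v : 'cV[R]_k) i : dotv v v = 1 -> `|v i 0| <= 1.
Proof.
move=> h; apply: abs_le1; apply: le_trans (sq_le_sum v i) _.
by move: h; rewrite /dotv => <-; under eq_bigr do rewrite expr2.
Qed.

Lemma l2norm_ge0 k (y : 'cV[R]_k) : 0 <= l2norm y.
Proof. exact: sqrtr_ge0. Qed.

Lemma l2norm_sq k (y : 'cV[R]_k) : l2norm y ^+ 2 = \sum_j y j 0 ^+ 2.
Proof. by rewrite /l2norm sqr_sqrtr // sumr_ge0 // => j _; exact: sqr_ge0. Qed.

Lemma l2norm_le1 k (y : 'cV[R]_k) i : l2norm y <= 1 -> `|y i 0| <= 1.
Proof.
move=> h; apply: abs_le1; apply: le_trans (sq_le_sum y i) _.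
rewrite -l2norm_sq; have := l2norm_ge0 y; nra.
Qed.

Lemma normalize_unit k (y : 'cV[R]_k) : 0 < l2norm y ->
  dotv ((l2norm y)^-1 *: y) ((l2norm y)^-1 *: y) = 1.
Proof.
move=> n0; rewrite /dotv.
under eq_bigr do rewrite !mxE mulrACA.
rewrite -mulr_sumr; under eq_bigr do rewrite -expr2.
by rewrite -l2norm_sq -expr2 -exprMn mulVf ?expr1n // gt_eqF.
Qed.

Definition rk k : R :=
  (fine (iter_int k (fun x => if (l2norm (vec_of k x) <= 1)%R then 1%E else 0%E)))^-1.

Lemma rk_ge0 k : 0 <= rk k.
Proof.
rewrite /rk invr_ge0 fine_ge0 //; apply: iter_int_ge0 => x; by case: ifP.
Qed.

Lemma E_sphere_bound k (g : 'cV[R]_k -> \bar R) (B : R) : 0 <= B ->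
  (forall v, (0 <= g v)%E) -> (forall v, dotv v v = 1 -> (g v <= B%:E)%E) ->
  (0 <= E_sphere g)%E /\ (E_sphere g <= (B * 2 ^+ k * rk k)%:E)%E.
Proof.
move=> B0 g0 gB; rewrite /E_sphere -/(rk k).
set X := iter_int _ _.
have X0 : (0 <= X)%E by apply: iter_int_ge0 => x /=; case: ifP.
have XB : (X <= (B * 2 ^+ k)%:E)%E.
  apply: iter_int_cube => // x /=; first by case: ifP.
  case: ifPn => [/andP[n0 n1]|_]; last by case: ifP; rewrite ?lee_fin.
  have -> : [forall j : 'I_k, (`|x j| <= 1)%R].
    by apply/fintype.forallP => j; have := l2norm_le1 j n1; rewrite mxE.
  exact/gB/normalize_unit.
have Xf : X \is a fin_num by rewrite ge0_fin_numE // (le_lt_trans XB) // ltey.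
rewrite -(fineK Xf) -EFinM !lee_fin; split.
  by rewrite mulr_ge0 ?rk_ge0 // fine_ge0.
by rewrite ler_wpM2r ?rk_ge0 // -lee_fin fineK.
Qed.
Local Close Scope ereal_scope.


Definition bil k (S : 'M[R]_k) (x y : 'cV[R]_k) : R := (x^T *m S *m y) 0 0.
Definition Abound k (A : 'M[R]_k) : R := \sum_j \sum_i `|A i j|.

Lemma qform_bound k (A : 'M[R]_k) (v : 'cV[R]_k) : (forall i, `|v i 0| <= 1) -> `|qform A v| <= Abound A.
Proof.
move=> hv; rewrite /qform /Abound mxE.
apply: le_trans (ler_norm_sum _ _ _) _; apply: ler_sum => j _.
rewrite normrM mxE; apply: le_trans (ler_wpM2l (normr_ge0 _) (hv j)) _; rewrite mulr1.
apply: le_trans (ler_norm_sum _ _ _) _; apply: ler_sum => i _.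
rewrite normrM mxE; have := hv i; have := normr_ge0 (A i j); have := normr_ge0 (v i 0); nra.
Qed.

Lemma bil_sym k (S : 'M[R]_k) (x y : 'cV[R]_k) : S^T = S -> bil S y x = bil S x y.
Proof.
move=> hS; rewrite /bil.
transitivity ((y^T *m S *m x)^T 0 0); first by rewrite [RHS]mxE.
by rewrite !trmx_mul trmxK hS mulmxA.
Qed.

Lemma qform_add k (S : 'M[R]_k) (x y : 'cV[R]_k) t :
  qform S (x + t *: y) = qform S x + t * (bil S x y + bil S y x) + t ^+ 2 * qform S y.
Proof.
rewrite /qform /bil.
have -> : (x + t *: y)^T = x^T + t *: y^T by apply/matrixP => i j; rewrite !mxE.
have -> : (x^T + t *: y^T) *m S *m (x + t *: y) =
   x^T *m S *m x + t *: (x^T *m S *m y) + t *: (y^T *m S *m x) + (t * t) *: (y^T *m S *m y).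
  rewrite !mulmxDl !mulmxDr -!scalemxAl -!scalemxAr scalerA.
  by rewrite !addrA; congr (_ + _); rewrite -!addrA; congr (_ + _); rewrite addrC.
by rewrite !mxE; ring.
Qed.

Lemma cs k (S : 'M[R]_k) (x y : 'cV[R]_k) : S^T = S -> (forall u, 0 <= qform S u) ->
  bil S x y ^+ 2 <= qform S x * qform S y.
Proof.
move=> hS hpos.
set a := qform S x; set b := bil S x y; set c := qform S y.
have H t : 0 <= a + t * (2 * b) + t ^+ 2 * c.
  have -> : a + t * (2 * b) + t ^+ 2 * c = qform S (x + t *: y).
    by rewrite qform_add (@bil_sym _ S x y hS) -/a -/b -/c; ring.
  exact: hpos.
have c0 : 0 <= c by exact: hpos.
have a0 : 0 <= a by exact: hpos.
have [cp|c0'] := ltP 0 c.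
  have := H (- b / c).
  have -> : a + - b / c * (2 * b) + (- b / c) ^+ 2 * c = (a * c - b ^+ 2) / c.
    by field; rewrite gt_eqF.
  move=> h; have : 0 <= c * ((a * c - b ^+ 2) / c) by exact: mulr_ge0.
  rewrite mulrC -mulrA mulVf ?gt_eqF // mulr1; lra.
have ce : c = 0 by apply/eqP; rewrite eq_le c0' c0.
have [be|bn] := eqVneq b 0; first by rewrite be ce; lra.
have := H (- (a + 1) / (2 * b)); rewrite ce mulr0 addr0.
have -> : - (a + 1) / (2 * b) * (2 * b) = - (a + 1).
  by field.
lra.
Qed.

Lemma spd_unit k (S : 'M[R]_k) : spd S -> S \in unitmx.
Proof.
move=> [hS hp]; rewrite unitmxE unitfE; apply/negP => /det0P [v v0 vS].
have := hp v^T; rewrite trmx_eq0 => /(_ v0).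
by rewrite /qform trmxK vS mul0mx mxE ltxx.
Qed.

Definition Ainv k (S : 'M[R]_k) := (invmx S)^T *m S *m invmx S.

Lemma spd_ge0 k (S : 'M[R]_k) : spd S -> forall u, 0 <= qform S u.
Proof.
move=> [_ hp] u; have [->|u0] := eqVneq u 0; last exact/ltW/hp.
by rewrite /qform !mulmx0 mxE.
Qed.

Lemma spd_lower k (S : 'M[R]_k) (v : 'cV[R]_k) : spd S -> dotv v v = 1 ->
  1 <= qform S v * qform (Ainv S) v.
Proof.
move=> hS hv.
have U := spd_unit hS.
have h1 : bil S v (invmx S *m v) = 1.
  rewrite /bil mulmxA -(mulmxA v^T) mulmxV // mulmx1 -hv /dotv mxE.
  by apply: eq_bigr => i _; rewrite mxE.
have h2 : qform S (invmx S *m v) = qform (Ainv S) v.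
  by rewrite /qform /Ainv trmx_mul !mulmxA.
have := cs v (invmx S *m v) hS.1 (spd_ge0 hS).
by rewrite h1 h2 expr1n.
Qed.


Lemma abs_between (lo x hi : R) : lo <= x -> x <= hi -> `|x| <= `|hi| + `|lo|.
Proof.
move=> h1 h2; have := normr_ge0 hi; have := normr_ge0 lo; have := ler_norm hi; have := ler_norm (- lo); rewrite normrN => h3 h4 h5 h6.
rewrite ler_norml; apply/andP; split; lra.
Qed.

Definition Kat k (m : 'cV[R]_k) (S : 'M[R]_k) : R :=
  \sum_i `|m i 0| + (`|ln (Num.sqrt (Abound S))| + `|ln (Num.sqrt ((Abound (Ainv S))^-1))|).

Lemma Kat_ge0 k (m : 'cV[R]_k) S : 0 <= Kat m S.
Proof. by rewrite /Kat addr_ge0 ?addr_ge0 // sumr_ge0. Qed.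

Lemma Pvw_bound k (v : 'cV[R]_k) (w : 'cV[R]_2) m S : spd S -> dotv v v = 1 ->
  (forall i, `|w i 0| <= 1) -> `|Pvw v w m S| <= Kat m S.
Proof.
move=> hS hv hw.
have hv1 : forall i, `|v i 0| <= 1 by move=> i; exact: dotv_unit_le1.
rewrite /Pvw /Kat; apply: le_trans (ler_normD _ _) _; rewrite !normrM.
apply: lerD.
  apply: le_trans (ler_wpM2r (normr_ge0 _) (hw 0)) _; rewrite mul1r.
  apply: le_trans (ler_norm_sum _ _ _) _; apply: ler_sum => i _.
  rewrite normrM; have := hv1 i; have := normr_ge0 (m i 0); have := normr_ge0 (v i 0); nra.
apply: le_trans (ler_wpM2r (normr_ge0 _) (hw 1)) _; rewrite mul1r.
set q := qform S v; set q' := qform (Ainv S) v.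
have q0 : 0 <= q by exact: spd_ge0.
have qN : q <= Abound S by apply: le_trans (ler_norm _) (qform_bound _ hv1).
have q'M : q' <= Abound (Ainv S) by apply: le_trans (ler_norm _) (qform_bound _ hv1).
have h1 : 1 <= q * q' by exact: spd_lower.
have h2 : 1 <= q * Abound (Ainv S) by apply: le_trans h1 _; exact: ler_wpM2l.
have Mp : 0 < Abound (Ainv S).
  rewrite ltNge; apply/negP => hM; have : q * Abound (Ainv S) <= 0 by exact: mulr_ge0_le0.
  lra.
have qlo : (Abound (Ainv S))^-1 <= q.
  by rewrite -(ler_pM2r Mp) mulVf ?gt_eqF.
have qp : 0 < q by apply: lt_le_trans qlo; rewrite invr_gt0.
apply: abs_between.
  rewrite ler_ln ?posrE ?sqrtr_gt0 ?invr_gt0 // ler_sqrt //.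
rewrite ler_ln ?posrE ?sqrtr_gt0 // ?ler_sqrt //; last by apply: lt_le_trans qN.
exact: le_trans qN.
Qed.

End S.
Section C.
Context (R : realType).
Local Open Scope ereal_scope.

Definition extn (n : nat) (c : 'I_n -> R) (k : nat) : R :=
  if insub k is Some i then c i else 0%R.

Lemma extnE n (c : 'I_n -> R) (i : 'I_n) : extn c i = c i.
Proof. by rewrite /extn valK. Qed.

Definition extp n (c : 'I_n -> R) k : R := Num.max (extn c k) 0%R.

Lemma extp_ge0 n (c : 'I_n -> R) k : (0 <= extp c k)%R.
Proof. by rewrite /extp le_max lexx orbT. Qed.

Definition nn n (c : 'I_n -> R) k : {nonneg R} := NngNum (extp_ge0 c k).

Lemma extpE n (c : 'I_n -> R) (i : 'I_n) : (forall i, 0 <= c i)%R -> extp c i = c i.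
Proof. by move=> h; rewrite /extp extnE max_l. Qed.

Definition mrow n1 n2 (c2 : 'I_n2 -> R) (x : 'I_n1 -> R) (y : 'I_n2 -> R) (k : nat) :=
  msum (fun l => mscale (nn c2 l) (@dirac _ (R * R)%type (extn x k, extn y l) R)) n2.

Definition mcoup n1 n2 (c1 : 'I_n1 -> R) (c2 : 'I_n2 -> R) (x : 'I_n1 -> R) (y : 'I_n2 -> R) :=
  msum (fun k => mscale (nn c1 k) (mrow c2 x y k)) n1.

Lemma mcoupE n1 n2 (c1 : 'I_n1 -> R) (c2 : 'I_n2 -> R) x y U :
  (forall i, 0 <= c1 i)%R -> (forall j, 0 <= c2 j)%R ->
  mcoup c1 c2 x y U = (\sum_i \sum_j c1 i * c2 j * ((x i, y j) \in U)%:R)%:E.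
Proof.
move=> h1 h2; rewrite /mcoup /mrow /msum /mscale /= -sumEFin; apply: eq_bigr => i _.
rewrite /mscale /= /nn /= /msum /= extpE // -sumEFin ge0_sume_distrr; last first.
  by move=> j _; rewrite mule_ge0 //= lee_fin extp_ge0.
apply: eq_bigr => j _; rewrite /mscale /= extpE // diracE !extnE -!EFinM; congr (_%:E); ring.
Qed.


Definition pcoup n1 n2 (c1 : 'I_n1 -> R) (c2 : 'I_n2 -> R) (x : 'I_n1 -> R) (y : 'I_n2 -> R)
  : probability (R * R)%type R :=
  mnormalize (mcoup c1 c2 x y) (@dirac _ (R * R)%type (0%R, 0%R) R).

Lemma mcoupT n1 n2 (c1 : 'I_n1 -> R) (c2 : 'I_n2 -> R) x y :
  (forall i, 0 <= c1 i)%R -> (forall j, 0 <= c2 j)%R ->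
  (\sum_i c1 i = 1)%R -> (\sum_j c2 j = 1)%R -> mcoup c1 c2 x y setT = 1.
Proof.
move=> h1 h2 s1 s2; rewrite mcoupE //; congr (_%:E).
rewrite -[RHS]s1; apply: eq_bigr => i _.
under eq_bigr do rewrite in_setT mulr1.
by rewrite -mulr_sumr s2 mulr1.
Qed.

Lemma pcoupE n1 n2 (c1 : 'I_n1 -> R) (c2 : 'I_n2 -> R) x y U :
  (forall i, 0 <= c1 i)%R -> (forall j, 0 <= c2 j)%R ->
  (\sum_i c1 i = 1)%R -> (\sum_j c2 j = 1)%R -> pcoup c1 c2 x y U = mcoup c1 c2 x y U.
Proof.
move=> h1 h2 s1 s2; transitivity (mnormalize (mcoup c1 c2 x y) (@dirac _ (R * R)%type (0%R, 0%R) R) U); first by [].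
rewrite /mnormalize /=.
have T1 := mcoupT x y h1 h2 s1 s2; rewrite /mcoup in T1; rewrite T1.
by rewrite onee_eq0 /= invr1 mule1.
Qed.

Lemma mcoup_marg1 n1 n2 (c1 : 'I_n1 -> R) (c2 : 'I_n2 -> R) x y A :
  (forall i, 0 <= c1 i)%R -> (forall j, 0 <= c2 j)%R -> (\sum_j c2 j = 1)%R ->
  mcoup c1 c2 x y (A `*` setT)%classic = \sum_i (c1 i * \1_A (x i))%:E.
Proof.
move=> h1 h2 s2; rewrite mcoupE // sumEFin; congr (_%:E); apply: eq_bigr => i _.
have E j : ((x i, y j) \in (A `*` setT)%classic) = (x i \in A).
  by apply/idP/idP => [/set_mem [/= h _]|/set_mem h]; apply/mem_set.
under eq_bigr do rewrite E.
by rewrite indicE -mulr_suml -mulr_sumr s2 mulr1.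
Qed.

Lemma mcoup_marg2 n1 n2 (c1 : 'I_n1 -> R) (c2 : 'I_n2 -> R) x y A :
  (forall i, 0 <= c1 i)%R -> (forall j, 0 <= c2 j)%R -> (\sum_i c1 i = 1)%R ->
  mcoup c1 c2 x y (setT `*` A)%classic = \sum_j (c2 j * \1_A (y j))%:E.
Proof.
move=> h1 h2 s1; rewrite mcoupE // sumEFin; congr (_%:E).
have E i j : ((x i, y j) \in (setT `*` A)%classic) = (y j \in A).
  by apply/idP/idP => [/set_mem [/= _ h]|/set_mem h]; apply/mem_set.
under eq_bigr do under eq_bigr do rewrite E.
rewrite exchange_big /=; apply: eq_bigr => j _.
by rewrite indicE -!mulr_suml s1 mul1r.
Qed.

Lemma pcoup_int n1 n2 (c1 : 'I_n1 -> R) (c2 : 'I_n2 -> R) (x : 'I_n1 -> R) (y : 'I_n2 -> R) (f : R * R -> \bar R) :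
  (forall i, 0 <= c1 i)%R -> (forall j, 0 <= c2 j)%R ->
  (\sum_i c1 i = 1)%R -> (\sum_j c2 j = 1)%R ->
  (forall z, 0 <= f z) -> measurable_fun setT f ->
  \int[pcoup c1 c2 x y]_(z in setT) f z = \sum_i (c1 i)%:E * \sum_j (c2 j)%:E * f (x i, y j).
Proof.
move=> h1 h2 s1 s2 f0 mf.
rewrite (@eq_measure_integral _ _ _ setT (mcoup c1 c2 x y)); last first.
  by move=> A _ _; apply: pcoupE.
rewrite /mcoup ge0_integral_measure_sum //; apply: eq_bigr => i _.
rewrite ge0_integral_mscale //= extpE //; congr (_ * _).
rewrite /mrow ge0_integral_measure_sum //; apply: eq_bigr => j _.
rewrite ge0_integral_mscale //= extpE // integral_dirac // diracT mul1e !extnE.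
by [].
Qed.

End C.

Section W.
Context (R : realType).
Local Open Scope ereal_scope.

Lemma E_sphere_ge0 k (g : 'cV[R]_k -> \bar R) : (forall v, 0 <= g v) -> 0 <= E_sphere g.
Proof.
move=> g0; rewrite /E_sphere -/(@rk R k) mule_ge0 // ?lee_fin ?rk_ge0 //.
by apply: iter_int_ge0 => x /=; case: ifP.
Qed.

Lemma Wpp_ge0 (p : R) a b : 0 <= Wpp p a b.
Proof.
apply: le_ereal_inf_tmp => _ [pi _ <-]; apply: integral_ge0 => z _.
by rewrite lee_fin powR_ge0.
Qed.

Lemma term_le_sum n (F : 'I_n -> R) i : (forall j, 0 <= F j)%R -> (F i <= \sum_j F j)%R.
Proof. by move=> h; rewrite (bigD1 i) //= lerDl sumr_ge0. Qed.

Lemma Wpp_le d (G1 G2 : fdmeas R d) (f : 'cV[R]_d -> 'M[R]_d -> R) (p B : R) :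
  is_fdprob G1 -> is_fdprob G2 -> (0 <= p)%R -> (0 <= B)%R ->
  (forall i j, `|f ((@atom_mu _ _ G1) i) ((@atom_Sig _ _ G1) i) - f ((@atom_mu _ _ G2) j) ((@atom_Sig _ _ G2) j)| <= B)%R ->
  Wpp p (pushfd f G1) (pushfd f G2) <= (B `^ p)%:E.
Proof.
move=> [h1 [s1 _]] [h2 [s2 _]] p0 B0 hB.
set x := fun i => f ((@atom_mu _ _ G1) i) ((@atom_Sig _ _ G1) i).
set y := fun j => f ((@atom_mu _ _ G2) j) ((@atom_Sig _ _ G2) j).
set pi := pcoup ((@wt _ _ G1)) ((@wt _ _ G2)) x y.
have mc : measurable_fun setT (fun z : R * R => ((`|z.1 - z.2|) `^ p)%:E).
  apply/measurable_EFinP.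
  have -> : (fun z : R * R => (`|z.1 - z.2|) `^ p)%R = ((fun r : R => r `^ p) \o (Num.norm \o (fst \- snd)))%R.
    by apply/funext => z.
  apply: measurableT_comp; first exact: measurable_powR.
  apply: measurableT_comp; first exact: normr_measurable.
  exact: measurable_funB measurable_fst measurable_snd.
apply: ge_ereal_inf; exists (\int[pi]_(z in setT) ((`|z.1 - z.2|) `^ p)%:E).
  exists pi => // A mA; split.
    by rewrite pcoupE // mcoup_marg1.
  by rewrite pcoupE // mcoup_marg2.
rewrite pcoup_int //.
have E : forall i, ((@wt _ _ G1) i)%:E * (\sum_j ((@wt _ _ G2) j)%:E * ((`|(x i, y j).1 - (x i, y j).2|) `^ p)%:E)
   = ((@wt _ _ G1) i * \sum_j ((@wt _ _ G2) j * (`|x i - y j|) `^ p))%:E.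
  by move=> i; rewrite EFinM -sumEFin; congr (_ * _); apply: eq_bigr => j _; rewrite EFinM.
under eq_bigr do rewrite E.
rewrite sumEFin lee_fin.
apply: le_trans (_ : (\sum_i (@wt _ _ G1) i * \sum_j (@wt _ _ G2) j * B `^ p <= _)%R).
  apply: ler_sum => i _; apply: ler_wpM2l => //; apply: ler_sum => j _.
  apply: ler_wpM2l => //; apply: ge0_ler_powR => //; rewrite ?nnegrE //.
  exact: hB.
under eq_bigr do rewrite -mulr_suml s2 mul1r.
by rewrite -mulr_suml s1 mul1r.
Qed.

End W.

Unset Implicit Arguments.

Theorem proposition3 (R : realType) (d : nat) (p : R) (G1 G2 : fdmeas R d) :
  (0 < d)%N -> 1 <= p ->
  is_fdprob G1 -> is_fdprob G2 ->
  (forall (m0 : 'cV[R]_d) (S0 : 'M[R]_d), spd S0 ->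
     (fd_integral G1 (fun m1 S1 => (gdist m1 S1 m0 S0 `^ p)%R) < +oo)%E /\
     (fd_integral G2 (fun m2 S2 => (gdist m0 S0 m2 S2 `^ p)%R) < +oo)%E) ->
  (SMixWpp p G1 G2 < +oo)%E.
Proof.
move=> _ p1 hG1 hG2 _.
have p0 : 0 <= p by apply: le_trans p1; exact: ler01.
set K := \sum_i Kat (@atom_mu _ _ G1 i) (@atom_Sig _ _ G1 i) +
         \sum_j Kat (@atom_mu _ _ G2 j) (@atom_Sig _ _ G2 j).
have Ks1 : 0 <= \sum_i Kat (@atom_mu _ _ G1 i) (@atom_Sig _ _ G1 i).
  by apply: sumr_ge0 => i _; exact: Kat_ge0.
have Ks2 : 0 <= \sum_j Kat (@atom_mu _ _ G2 j) (@atom_Sig _ _ G2 j).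
  by apply: sumr_ge0 => i _; exact: Kat_ge0.
have K0 : 0 <= K by exact: addr_ge0.
have hK1 i : Kat (@atom_mu _ _ G1 i) (@atom_Sig _ _ G1 i) <= K.
  apply: le_trans (_ : _ <= \sum_i Kat (@atom_mu _ _ G1 i) (@atom_Sig _ _ G1 i)) _.
    by apply: term_le_sum => j; exact: Kat_ge0.
  by rewrite /K lerDl.
have hK2 j : Kat (@atom_mu _ _ G2 j) (@atom_Sig _ _ G2 j) <= K.
  apply: le_trans (_ : _ <= \sum_j Kat (@atom_mu _ _ G2 j) (@atom_Sig _ _ G2 j)) _.
    by apply: term_le_sum => i; exact: Kat_ge0.
  by rewrite /K lerDr.
set B := (2 * K) `^ p.
have B0 : 0 <= B by exact: powR_ge0.
have inner : forall w, dotv w w = 1 -> forall v, dotv v v = 1 ->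
    (Wpp p (pushfd (Pvw v w) G1) (pushfd (Pvw v w) G2) <= B%:E)%E.
  move=> w hw v hv; apply: Wpp_le => //; first by rewrite mulr_ge0.
  have hw1 i : `|w i 0| <= 1 by exact: dotv_unit_le1.
  move=> i j; apply: le_trans (ler_normB _ _) _.
  rewrite mulr2n mulrDl mul1r; apply: lerD.
    apply: le_trans (hK1 i); apply: Pvw_bound => //; exact: hG1.2.2.
  apply: le_trans (hK2 j); apply: Pvw_bound => //; exact: hG2.2.2.
have outer : forall w : 'cV[R]_2, dotv w w = 1 ->
    (E_sphere (fun v => Wpp p (pushfd (Pvw v w) G1) (pushfd (Pvw v w) G2)) <= (B * 2 ^+ d * rk R d)%:E)%E.
  move=> w hw; exact: (E_sphere_bound B0 (fun v => Wpp_ge0 _ _ _) (inner w hw)).2.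
rewrite /SMixWpp.
apply: le_lt_trans (ltry _).
have B'0 : 0 <= B * 2 ^+ d * rk R d by rewrite mulr_ge0 ?rk_ge0 // mulr_ge0 // exprn_ge0.
exact: (E_sphere_bound B'0 (fun w => E_sphere_ge0 (fun v => Wpp_ge0 _ _ _)) outer).2.
Qed.
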